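(* (Soundness of $\mathsf{GT}$.) For all finite multisets of formulas $\Gamma,\Delta$ of $\mathbf{PL}(\mathbin{\backslash\!\!/})$: if $\vdash_{\mathsf{GT}}\Gamma\Rightarrow\Delta$, then $\Gamma\models\bigvee\Delta$.
   Context: Fix a countably infinite set $\mathsf{Prop}$ of propositional variables. Classical formulas are generated by $\alpha ::= p \mid \bot \mid \neg\alpha \mid \alpha\wedge\alpha \mid \alpha\vee\alpha$ with $p\in\mathsf{Prop}$. Formulas of basic propositional team logic $\mathbf{PL}(\mathbin{\backslash\!\!/})$ are generated by $\phi ::= \alpha \mid \phi\wedge\phi \mid \phi\vee\phi \mid \phi\mathbin{\backslash\!\!/}\phi$ where $\alpha$ is classical (so negation is applied only to classical formulas); $\vee$ is the split disjunction and $\mathbin{\backslash\!\!/}$ the inquisitive disjunction. A team with domain $X\subseteq\mathsf{Prop}$ is a set $t\subseteq 2^X$ of valuations. For a team $t$ whose domain contains the variables of the formula: $t\models p$ iff $v(p)=1$ for all $v\in t$; $t\models\bot$ iff $t=\emptyset$; $t\models\neg\alpha$ iff $\{v\}\not\models\alpha$ for all $v\in t$; $t\models\phi\wedge\psi$ iff $t\models\phi$ and $t\models\psi$; $t\models\phi\vee\psi$ iff there are $s,u\subseteq t$ with $t=s\cup u$, $s\models\phi$, $u\models\psi$; $t\models\phi\mathbin{\backslash\!\!/}\psi$ iff $t\models\phi$ or $t\models\psi$. For a multiset $\Gamma$, $\Gamma\models\phi$ means every team satisfying all members of $\Gamma$ satisfies $\phi$. Conventions: $\bigvee\emptyset:=\bot$,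 $\bigwedge\emptyset:=\neg\bot$. A sequent is $\Gamma\Rightarrow\Delta$ with $\Gamma,\Delta$ finite multisets of formulas; ''$\Gamma,\Delta$'' denotes multiset union. Deep-inference notation: for a formula $\chi$ with a designated occurrence of a subformula that does not lie in the scope of any negation, $\chi\{\eta\}$ denotes the result of replacing that occurrence by $\eta$. The calculus $\mathsf{GT}$ (below $\alpha$ ranges over classical formulas, $\Lambda$ over multisets of classical formulas, everything else arbitrary): axioms $\Gamma,p\Rightarrow p,\Delta$ and $\Gamma,\bot\Rightarrow\Delta$; rules: (L$\neg$) from $\Gamma\Rightarrow\alpha,\Delta$ infer $\Gamma,\neg\alpha\Rightarrow\Delta$; (R$\neg$) from $\Gamma,\alpha\Rightarrow\Delta$ infer $\Gamma\Rightarrow\neg\alpha,\Delta$; (L$\wedge$) from $\Gamma,\phi,\psi\Rightarrow\Delta$ infer $\Gamma,\phi\wedge\psi\Rightarrow\Delta$; (R$\wedge$) from $\Gamma\Rightarrow\phi,\Lambda$ and $\Gamma\Rightarrow\psi,\Lambda$ infer $\Gamma\Rightarrow\phi\wedge\psi,\Lambda,\Delta$; (L$\vee$) from $\Gamma,\phi\Rightarrow\Lambda$ and $\Gamma,\psi\Rightarrow\Lambda$ infer $\Gamma,\phi\vee\psi\Rightarrow\Lambda,\Delta$; (R$\vee$) from $\Gamma\Rightarrow\phi,\psi,\Delta$ infer $\Gamma\Rightarrow\phi\vee\psi,\Delta$; (L$\mathbin{\backslash\!\!/}$) from $\Gamma,\chi\{\phi_L\}\Rightarrow\Delta$ and $\Gamma,\chi\{\phi_R\}\Rightarrow\Delta$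 infer $\Gamma,\chi\{\phi_L\mathbin{\backslash\!\!/}\phi_R\}\Rightarrow\Delta$; (R$\mathbin{\backslash\!\!/}$) from $\Gamma\Rightarrow\chi\{\phi_i\},\Delta$ ($i\in\{L,R\}$) infer $\Gamma\Rightarrow\chi\{\phi_L\mathbin{\backslash\!\!/}\phi_R\},\Delta$; (Cut) from $\Gamma\Rightarrow\phi,\Delta$ and $\Pi,\phi\Rightarrow\Sigma$ infer $\Pi,\Gamma\Rightarrow\Delta,\Sigma$. $\vdash_{\mathsf{GT}}$ denotes derivability in $\mathsf{GT}$. *)

(* Defs.v *)
From Stdlib Require Import List Permutation.
Import ListNotations.

Definition var := nat.

Inductive cform : Type :=
| CVar : var -> cform
| CBot : cform
| CNeg : cform -> cform
| CAnd : cform -> cform -> cform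
| COr  : cform -> cform -> cform.

Inductive form : Type :=
| Var : var -> form
| Bot : form
| Neg : cform -> form
| And : form -> form -> form
| Or  : form -> form -> form
| Ior : form -> form -> form.

Fixpoint emb (a : cform) : form :=
  match a with
  | CVar p => Var p
  | CBot => Bot
  | CNeg b => Neg b
  | CAnd b c => And (emb b) (emb c)
  | COr b c => Or (emb b) (emb c)
  end.

(* Valuations on the full variable set; a valuation of domain X is encoded
   as a v : var -> bool with v p = false for p outside X. *)
Definition valuation := var -> bool.
Definition team := valuation -> Prop.

Definition singleton (v : valuation) : team := fun w => w = v.

Fixpoint csat (a : cform) (t : team) : Prop :=
  match a with
  | CVar p => forall v, t v -> v p = true
  | CBot => forall v, ~ t v
  | CNeg b => forall v, t v -> ~ csat b (singleton v)
  | CAnd b c => csat b t /\ csat c t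
  | COr b c => exists s u : team,
      (forall v, t v <-> (s v \/ u v)) /\ csat b s /\ csat c u
  end.

Fixpoint sat (f : form) (t : team) : Prop :=
  match f with
  | Var p => forall v, t v -> v p = true
  | Bot => forall v, ~ t v
  | Neg b => forall v, t v -> ~ csat b (singleton v)
  | And f g => sat f t /\ sat g t
  | Or f g => exists s u : team,
      (forall v, t v <-> (s v \/ u v)) /\ sat f s /\ sat g u
  | Ior f g => sat f t \/ sat g t
  end.

Fixpoint coccurs (p : var) (a : cform) : Prop :=
  match a with
  | CVar q => p = q
  | CBot => False
  | CNeg b => coccurs p b
  | CAnd b c | COr b c => coccurs p b \/ coccurs p c
  end.

Fixpoint occurs (p : var) (f : form) : Prop :=
  match f with
  | Var q => p = q
  | Bot => False
  | Neg b => coccurs p b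
  | And f g | Or f g | Ior f g => occurs p f \/ occurs p g
  end.

Definition team_on (X : var -> Prop) (t : team) : Prop :=
  forall v, t v -> forall p, ~ X p -> v p = false.

Definition entails (G : list form) (f : form) : Prop :=
  forall (X : var -> Prop) (t : team),
    team_on X t ->
    (forall g, In g G -> forall p, occurs p g -> X p) ->
    (forall p, occurs p f -> X p) ->
    (forall g, In g G -> sat g t) ->
    sat f t.

Fixpoint bigvee (D : list form) : form :=
  match D with
  | [] => Bot
  | [f] => f
  | f :: r => Or f (bigvee r)
  end.

(* Deep-inference contexts: a designated occurrence of a subformula.
   Since Neg only takes classical formulas (cform), a hole in a form
   context is never in the scope of a negation. *)
Inductive ctx : Type :=
| Hole : ctx
| CtxAndL : ctx -> form -> ctx
| CtxAndR : form -> ctx -> ctx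
| CtxOrL : ctx -> form -> ctx
| CtxOrR : form -> ctx -> ctx
| CtxIorL : ctx -> form -> ctx
| CtxIorR : form -> ctx -> ctx.

Fixpoint plug (c : ctx) (e : form) : form :=
  match c with
  | Hole => e
  | CtxAndL c g => And (plug c e) g
  | CtxAndR f c => And f (plug c e)
  | CtxOrL c g => Or (plug c e) g
  | CtxOrR f c => Or f (plug c e)
  | CtxIorL c g => Ior (plug c e) g
  | CtxIorR f c => Ior f (plug c e)
  end.

(* The calculus GT. Multisets are lists taken up to permutation (rule GT_perm). *)
Inductive GT : list form -> list form -> Prop :=
| GT_perm : forall G G' D D', Permutation G G' -> Permutation D D' ->
    GT G D -> GT G' D'
| GT_ax : forall G D p, GT (Var p :: G) (Var p :: D)
| GT_bot : forall G D, GT (Bot :: G) D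
| GT_Lneg : forall G D a, GT G (emb a :: D) -> GT (Neg a :: G) D
| GT_Rneg : forall G D a, GT (emb a :: G) D -> GT G (Neg a :: D)
| GT_Land : forall G D f g, GT (f :: g :: G) D -> GT (And f g :: G) D
| GT_Rand : forall G (L : list cform) D f g,
    GT G (f :: map emb L) -> GT G (g :: map emb L) ->
    GT G (And f g :: map emb L ++ D)
| GT_Lor : forall G (L : list cform) D f g,
    GT (f :: G) (map emb L) -> GT (g :: G) (map emb L) ->
    GT (Or f g :: G) (map emb L ++ D)
| GT_Ror : forall G D f g, GT G (f :: g :: D) -> GT G (Or f g :: D)
| GT_Lior : forall G D c f g,
    GT (plug c f :: G) D -> GT (plug c g :: G) D ->
    GT (plug c (Ior f g) :: G) D
| GT_RiorL : forall G D c f g,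
    GT G (plug c f :: D) -> GT G (plug c (Ior f g) :: D)
| GT_RiorR : forall G D c f g,
    GT G (plug c g :: D) -> GT G (plug c (Ior f g) :: D)
| GT_cut : forall G D P S f,
    GT G (f :: D) -> GT (f :: P) S -> GT (P ++ G) (D ++ S).

(* Main.v *)
Require Import Defs.
From Stdlib Require Import List Permutation Classical.
Import ListNotations.

Lemma sat_ext f : forall t t', sat f t -> (forall v, t v <-> t' v) -> sat f t'.
Proof.
  induction f as [p| |c| | |]; intros t t' H E; simpl in *.
  - intros v Hv; apply H; apply E; auto.
  - intros v Hv; apply (H v); apply E; auto.
  - intros v Hv; apply H; apply E; auto.
  - destruct H; split; eauto.
  - destruct H as (s&u&Hc&Hs&Hu); exists s, u; split; [intro v; rewrite <- (E v); apply Hc | auto].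
  - destruct H; [left|right]; eauto.
Qed.

Lemma sat_empty f : forall t, (forall v, ~ t v) -> sat f t.
Proof.
  induction f as [p| |c| | |]; intros t H; simpl.
  - intros v Hv; exfalso; eapply H; eauto.
  - exact H.
  - intros v Hv; exfalso; eapply H; eauto.
  - split; auto.
  - exists t, t; split; [intro v; tauto | auto].
  - left; auto.
Qed.

Lemma sat_down f : forall t t', sat f t -> (forall v, t' v -> t v) -> sat f t'.
Proof.
  induction f as [p| |c| | |]; intros t t' H Sub; simpl in *.
  - intros v Hv; apply H; auto.
  - intros v Hv; apply (H v); auto.
  - intros v Hv; apply H; auto.
  - destruct H; split; eauto.
  - destruct H as (s&u&Hc&Hs&Hu).
    exists (fun v => t' v /\ s v), (fun v => t' v /\ u v). split.
    + intro v; split; [intro H'; pose proof (proj1 (Hc v) (Sub v H')); tauto | tauto].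
    + split; [eapply IHf1; [exact Hs | intros v [_ H]; exact H]
             | eapply IHf2; [exact Hu | intros v [_ H]; exact H]].
  - destruct H; [left|right]; eauto.
Qed.

Lemma csat_emb a : forall t, csat a t <-> sat (emb a) t.
Proof.
  induction a as [p| |c| |]; intro t; simpl; try tauto.
  - rewrite IHa1, IHa2; tauto.
  - split; intros (s&u&Hc&Hs&Hu); exists s, u;
      refine (conj Hc (conj _ _)); first [apply IHa1 | apply IHa2]; auto.
Qed.

Lemma flat a : forall t, (forall v, t v -> sat (emb a) (singleton v)) -> sat (emb a) t.
Proof.
  induction a as [p| |c| |]; intros t H; simpl in *.
  - intros v Hv; exact (H v Hv v eq_refl).
  - intros v Hv; exact (H v Hv v eq_refl).
  - intros v Hv; exact (H v Hv v eq_refl).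
  - split; [apply IHa1|apply IHa2]; intros v Hv; apply (H v Hv).
  - exists (fun v => t v /\ sat (emb a1) (singleton v)),
           (fun v => t v /\ sat (emb a2) (singleton v)). split.
    + intro v; split; [intro Hv | tauto].
      destruct (H v Hv) as (s&u&Hc&Hs&Hu).
      destruct (proj1 (Hc v) eq_refl) as [Hsv|Huv].
      * left; split; auto; eapply sat_down; [exact Hs | intros w E; unfold singleton in E; subst; exact Hsv].
      * right; split; auto; eapply sat_down; [exact Hu | intros w E; unfold singleton in E; subst; exact Huv].
    + split; [apply IHa1 | apply IHa2]; intros v [_ Hv]; exact Hv.
Qed.

Lemma bigvee_cons f D t : sat (bigvee (f::D)) t <->
  exists s u, (forall v, t v <-> s v \/ u v) /\ sat f s /\ sat (bigvee D) u.
Proof.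
  destruct D as [|g D].
  - change (bigvee [f]) with f. change (bigvee []) with Bot. split.
    + intro H; exists t, (fun _ => False); split; [intro; tauto | split; [auto | simpl; auto]].
    + intros (s&u&Hc&Hs&Hu); eapply sat_ext; [exact Hs|]; intro v; rewrite Hc;
        simpl in Hu; specialize (Hu v); tauto.
  - change (bigvee (f::g::D)) with (Or f (bigvee (g::D))). split; intro H; exact H.
Qed.

Lemma bigvee_app_r D1 : forall D2 t,
  (exists s u, (forall v, t v <-> s v \/ u v) /\ sat (bigvee D1) s /\ sat (bigvee D2) u) ->
  sat (bigvee (D1 ++ D2)) t.
Proof.
  induction D1 as [|f D1 IH]; intros D2 t (s&u&Hc&Hs&Hu).
  - change ([] ++ D2) with D2. simpl in Hs.
    eapply sat_ext; [exact Hu|]; intro v; rewrite Hc; specialize (Hs v); tauto.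
  - rewrite <- app_comm_cons. apply bigvee_cons.
    apply bigvee_cons in Hs as (s1&s2&Hc'&H1&H2).
    exists s1, (fun v => s2 v \/ u v). split.
    + intro v; rewrite Hc, Hc'; tauto.
    + split; auto. apply IH. exists s2, u; split; [intro; tauto | auto].
Qed.

Lemma weak_r D1 D2 t : sat (bigvee D1) t -> sat (bigvee (D1 ++ D2)) t.
Proof.
  intro H; apply bigvee_app_r; exists t, (fun _ => False); split; [intro; tauto|].
  split; auto; apply sat_empty; auto.
Qed.

Lemma bigvee_perm D D' : Permutation D D' -> forall t, sat (bigvee D) t -> sat (bigvee D') t.
Proof.
  induction 1; intros t Hb; auto.
  - apply bigvee_cons in Hb as (s&u&Hc&Hs&Hu); apply bigvee_cons.
    exists s, u; split; [exact Hc | split; [exact Hs | apply IHPermutation; exact Hu]].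
  - apply bigvee_cons in Hb as (s&u&Hc&Hs&Hu).
    apply bigvee_cons in Hu as (s'&u'&Hc'&Hs'&Hu').
    apply bigvee_cons. exists s', (fun v => s v \/ u' v). split.
    + intro v; rewrite Hc, Hc'; tauto.
    + split; auto. apply bigvee_cons. exists s, u'. split; [intro; tauto | auto].
Qed.

Fixpoint cbig (L : list cform) : cform :=
  match L with [] => CBot | [a] => a | a :: r => COr a (cbig r) end.

Lemma cbig_eq L : bigvee (map emb L) = emb (cbig L).
Proof.
  induction L as [|a L IH]; [reflexivity|].
  destruct L as [|b L]; [reflexivity|].
  change (bigvee (map emb (a::b::L))) with (Or (emb a) (bigvee (map emb (b::L)))).
  rewrite IH. reflexivity.
Qed.

Lemma plug_mono c : forall A B, (forall t, sat A t -> sat B t) ->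
  forall t, sat (plug c A) t -> sat (plug c B) t.
Proof.
  induction c; simpl; intros A B HAB t H.
  - auto.
  - destruct H; split; eauto.
  - destruct H; split; eauto.
  - destruct H as (s&u&Hc&Hs&Hu); exists s, u; split; [exact Hc | split; eauto].
  - destruct H as (s&u&Hc&Hs&Hu); exists s, u; split; [exact Hc | split; eauto].
  - destruct H; [left|right]; eauto.
  - destruct H; [left|right]; eauto.
Qed.

Lemma plug_ior c f g : forall t, sat (plug c (Ior f g)) t ->
  sat (plug c f) t \/ sat (plug c g) t.
Proof.
  induction c; simpl; intros t H.
  - exact H.
  - destruct H as [H1 H2]; destruct (IHc _ H1); [left|right]; split; auto.
  - destruct H as [H1 H2]; destruct (IHc _ H2); [left|right]; split; auto.
  - destruct H as (s&u&Hc&Hs&Hu); destruct (IHc _ Hs); [left|right]; exists s, u; auto.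
  - destruct H as (s&u&Hc&Hs&Hu); destruct (IHc _ Hu); [left|right]; exists s, u; auto.
  - destruct H as [H|H]; [destruct (IHc _ H); [left; left | right; left]; auto | left; right; auto].
  - destruct H as [H|H]; [left; left; auto | destruct (IHc _ H); [left; right | right; right]; auto].
Qed.

Lemma sound G D : GT G D -> forall t, (forall g, In g G -> sat g t) -> sat (bigvee D) t.
Proof.
  induction 1; intros t HG.
  -
    apply (bigvee_perm D D' H0). apply IHGT. intros g Hg; apply HG.
    eapply Permutation_in; [exact H | exact Hg].
  -
    change (Var p :: D) with ([Var p] ++ D). apply weak_r.
    change (sat (Var p) t). apply HG; left; reflexivity.
  - apply sat_empty; intros v Hv; exact (HG Bot (or_introl eq_refl) v Hv).
  -
    assert (HN := HG (Neg a) (or_introl eq_refl)). simpl in HN.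
    destruct (proj1 (bigvee_cons _ _ _) (IHGT t (fun g Hg => HG g (or_intror Hg))))
      as (s&u&Hc&Hs&Hu).
    eapply sat_ext; [exact Hu|]. intro v; split.
    + intro Hu'; apply Hc; auto.
    + intro Htv; destruct (proj1 (Hc v) Htv) as [Hs'|Hu']; [|exact Hu'].
      exfalso; apply (HN v Htv); apply csat_emb; eapply sat_down;
        [exact Hs | intros w E; unfold singleton in E; subst; exact Hs'].
  -
    apply bigvee_cons.
    exists (fun v => t v /\ ~ csat a (singleton v)), (fun v => t v /\ csat a (singleton v)).
    split; [intro v; split; [intro Hv; destruct (classic (csat a (singleton v))); tauto | tauto]|].
    split; [simpl; intros v [Hv Hn]; exact Hn|].
    apply IHGT. intros g [<-|Hg].
    + apply flat. intros v [_ Hv]; apply csat_emb; exact Hv.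
    + eapply sat_down; [apply HG; exact Hg | intros v [Hv _]; exact Hv].
  -
    apply IHGT. assert (HA := HG _ (or_introl eq_refl)). simpl in HA.
    intros h [<-|[<-|Hh]]; [exact (proj1 HA) | exact (proj2 HA) | apply HG; right; exact Hh].
  -
    destruct (proj1 (bigvee_cons _ _ _) (IHGT1 t HG)) as (s&u&Hc&Hs&Hu).
    destruct (proj1 (bigvee_cons _ _ _) (IHGT2 t HG)) as (s'&u'&Hc'&Hs'&Hu').
    change (And f g :: map emb L ++ D) with ((And f g :: map emb L) ++ D).
    apply weak_r. apply bigvee_cons.
    exists (fun v => s v /\ s' v), (fun v => u v \/ u' v). split.
    + intro v; specialize (Hc v); specialize (Hc' v); tauto.
    + split.
      * split; [eapply sat_down; [exact Hs | intros v [H1 _]; exact H1]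
               | eapply sat_down; [exact Hs' | intros v [_ H1]; exact H1]].
      * rewrite cbig_eq in *. apply flat. intros v [Hv|Hv].
        -- eapply sat_down; [exact Hu | intros w E; unfold singleton in E; subst; exact Hv].
        -- eapply sat_down; [exact Hu' | intros w E; unfold singleton in E; subst; exact Hv].
  -
    assert (HO := HG _ (or_introl eq_refl)). simpl in HO.
    destruct HO as (s&u&Hc&Hs&Hu).
    assert (H1 : sat (bigvee (map emb L)) s).
    { apply IHGT1. intros h [<-|Hh]; [exact Hs|].
      eapply sat_down; [apply HG; right; exact Hh | intros v Hv; apply Hc; auto]. }
    assert (H2 : sat (bigvee (map emb L)) u).
    { apply IHGT2. intros h [<-|Hh]; [exact Hu|].
      eapply sat_down; [apply HG; right; exact Hh | intros v Hv; apply Hc; auto]. }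
    apply weak_r. rewrite cbig_eq in *. apply flat. intros v Hv.
    destruct (proj1 (Hc v) Hv) as [Hv'|Hv'].
    + eapply sat_down; [exact H1 | intros w E; unfold singleton in E; subst; exact Hv'].
    + eapply sat_down; [exact H2 | intros w E; unfold singleton in E; subst; exact Hv'].
  -
    destruct (proj1 (bigvee_cons _ _ _) (IHGT t HG)) as (s&u&Hc&Hs&Hu).
    apply bigvee_cons in Hu as (s'&u'&Hc'&Hs'&Hu').
    apply bigvee_cons. exists (fun v => s v \/ s' v), u'. split.
    + intro v; rewrite Hc, Hc'; tauto.
    + split; auto. exists s, s'; split; [intro; tauto | auto].
  -
    destruct (plug_ior _ _ _ _ (HG _ (or_introl eq_refl))) as [H1|H1].
    + apply IHGT1. intros h [<-|Hh]; [exact H1 | apply HG; right; exact Hh].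
    + apply IHGT2. intros h [<-|Hh]; [exact H1 | apply HG; right; exact Hh].
  - destruct (proj1 (bigvee_cons _ _ _) (IHGT t HG)) as (s&u&Hc&Hs&Hu).
    apply bigvee_cons. exists s, u. split; [exact Hc | split; [|exact Hu]].
    eapply plug_mono; [|exact Hs]. intros t0 H0; left; exact H0.
  - destruct (proj1 (bigvee_cons _ _ _) (IHGT t HG)) as (s&u&Hc&Hs&Hu).
    apply bigvee_cons. exists s, u. split; [exact Hc | split; [|exact Hu]].
    eapply plug_mono; [|exact Hs]. intros t0 H0; right; exact H0.
  -
    destruct (proj1 (bigvee_cons _ _ _)
      (IHGT1 t (fun g Hg => HG g (in_or_app _ _ _ (or_intror Hg))))) as (s&u&Hc&Hs&Hu).
    assert (HS : sat (bigvee S) s).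
    { apply IHGT2. intros h [<-|Hh]; [exact Hs|].
      eapply sat_down; [apply HG; apply in_or_app; left; exact Hh | intros v Hv; apply Hc; auto]. }
    apply bigvee_app_r. exists u, s. split; [intro v; rewrite Hc; tauto | auto].
Qed.

Theorem theorem3p2 : forall (G D : list form), GT G D -> entails G (bigvee D).
Proof.
  intros G D H X t _ _ _ HG. exact (sound G D H t HG).
Qed.
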